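(* Let $m,\ell\ge 2$. If $\sigma_1\in\mathcal{S}_{m,1}^{1\prec m}(1324)$ and $\sigma_2\in\mathcal{S}_{\ell,k}^{1\prec \ell}(1324)$ for some $k\ge1$, then $\sigma_1\odot\sigma_2\in\mathcal{S}_{n,k+1}^{1\prec n}(1324)$, where $n=\ell+m-1$.
   Context: $\mathcal{S}_n(1324)$ denotes the set of permutations of $\{1,\dots,n\}$ (in one-line notation) avoiding the pattern $1324$. For $a,k\ge1$, $\mathcal{S}_{n,k}^{a\prec n}(1324)$ is the set of $\sigma\in\mathcal{S}_n(1324)$ with $\sigma^{-1}(n)-\sigma^{-1}(a)=k$ and $\sigma^{-1}(b)>\sigma^{-1}(n)$ for all $b\in\{1,\dots,a-1\}$. Elements of $\mathcal{S}_{m,1}^{1\prec m}(1324)$ are called primitives; such a permutation has the form $\sigma_1=\pi_1\,1\,m\,\tau_1$ with words $\pi_1,\tau_1$ (possibly empty). Given a primitive $\sigma_1=\pi_1\,1\,m\,\tau_1$ of size $m$ and a permutation $\sigma_2\in\mathcal{S}_\ell(1324)$ of the form $\sigma_2=\pi_2\,1\,\theta_2\,\ell\,\tau_2$ (words $\pi_2,\theta_2,\tau_2$ possibly empty, so $1$ is to the left of $\ell$), the product is $\sigma_1\odot\sigma_2=\widehat{\pi}_2\,\pi_1\,1\,m\,\widehat{\theta}_2\,n\,\widehat{\tau}_2\,\tau_1$, where $n=\ell+m-1$ and $\widehat{\pi}_2,\widehat{\theta}_2,\widehat{\tau}_2$ are obtained from $\pi_2,\theta_2,\tau_2$ by adding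 $m-1$ to each entry. For example $2143\odot 41253=7214586 3$. *)

(* Defs.v *)
From mathcomp Require Import all_boot.
Set Implicit Arguments. Unset Strict Implicit. Unset Printing Implicit Defensive.

Definition is_perm (n : nat) (s : seq nat) : bool := perm_eq s (iota 1 n).

Definition avoids1324 (s : seq nat) : Prop :=
  ~ exists i j k l, [/\ i < j, j < k, k < l & l < size s] /\
      [/\ nth 0 s i < nth 0 s k, nth 0 s k < nth 0 s j & nth 0 s j < nth 0 s l].

Definition S1324 (n : nat) (s : seq nat) : Prop := is_perm n s /\ avoids1324 s.

(* Positions (0-based; only differences/comparisons matter). *)
Definition pos (x : nat) (s : seq nat) : nat := index x s.

(* S_{n,k}^{a < n}(1324): sigma^{-1}(n) - sigma^{-1}(a) = k (k >= 1 in use) and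
   every b in {1,...,a-1} lies to the right of n. *)
Definition S_prec (n k a : nat) (s : seq nat) : Prop :=
  [/\ S1324 n s,
      (pos n s = pos a s + k)%N &
      forall b, 1 <= b < a -> pos n s < pos b s].

(* The product sigma1 (.) sigma2 with m = size sigma1, l = size sigma2.
   sigma1 = pi1 1 m tau1,  sigma2 = pi2 1 theta2 l tau2. *)
Definition odot (s1 s2 : seq nat) : seq nat :=
  let m := size s1 in
  let l := size s2 in
  let n := (l + m - 1)%N in
  let pi1 := take (pos 1 s1) s1 in
  let tau1 := drop (pos 1 s1).+2 s1 in
  let pi2 := take (pos 1 s2) s2 in
  let theta2 := drop (pos 1 s2).+1 (take (pos l s2) s2) in
  let tau2 := drop (pos l s2).+1 s2 in
  let hat := map (addn (m - 1)) in
  hat pi2 ++ pi1 ++ [:: 1; m] ++ hat theta2 ++ [:: n] ++ hat tau2 ++ tau1.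

Example odot_ex : odot [:: 2; 1; 4; 3] [:: 4; 1; 2; 5; 3] = [:: 7; 2; 1; 4; 5; 8; 6; 3].
Proof. by []. Qed.

(* Main.v *)
Require Import Defs.
From mathcomp Require Import all_boot zify.

Lemma nth_filter_count (p : pred nat) s i : i < size s -> p (nth 0 s i) ->
  nth 0 (filter p s) (count p (take i s)) = nth 0 s i.
Proof.
elim: s i => [|x s IH] [|i] //= Hi Hp.
  by rewrite Hp.
case: (p x) => /=; last by rewrite add0n IH.
by rewrite IH.
Qed.

Lemma count_take_lt (p : pred nat) s i j : i < size s -> p (nth 0 s i) -> i < j ->
  count p (take i s) < count p (take j s).
Proof.
move=> Hi Hp Hij.
have -> : j = i + (j - i) by lia.
rewrite takeD count_cat (drop_nth 0 Hi).
have -> : j - i = (j - i - 1).+1 by lia.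
rewrite /= Hp; lia.
Qed.

Lemma filter_pat (p : pred nat) s i j k l :
  [/\ i < j, j < k, k < l & l < size s] ->
  [/\ nth 0 s i < nth 0 s k, nth 0 s k < nth 0 s j & nth 0 s j < nth 0 s l] ->
  p (nth 0 s i) -> p (nth 0 s j) -> p (nth 0 s k) -> p (nth 0 s l) ->
  ~ avoids1324 (filter p s).
Proof.
move=> [h1 h2 h3 h4] [v1 v2 v3] pi pj pk pl; apply.
exists (count p (take i s)), (count p (take j s)), (count p (take k s)), (count p (take l s)).
rewrite !nth_filter_count //; try lia.
split; split => //.
- by apply: count_take_lt => //; lia.
- by apply: count_take_lt => //; lia.
- by apply: count_take_lt => //; lia.
- rewrite size_filter -{2}(take_size s); apply: count_take_lt => //.
Qed.

Lemma avoid_map c s : avoids1324 s -> avoids1324 (map (addn c) s).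
Proof.
move=> H [i [j [k [l [[h1 h2 h3 h4] [v1 v2 v3]]]]]]; apply: H.
rewrite size_map in h4.
rewrite !(nth_map 0 0) in v1 v2 v3; try lia.
exists i, j, k, l; split; split => //; lia.
Qed.

Lemma decomp1 (s : seq nat) x y : x \in s -> y \in s -> index y s = (index x s).+1 ->
  s = take (index x s) s ++ x :: y :: drop (index x s).+2 s.
Proof.
move=> hx hy hi.
have hy' : (index x s).+1 < size s by rewrite -hi index_mem.
rewrite -{1}(cat_take_drop (index x s) s) (drop_nth 0 (ltnW hy')) (drop_nth 0 hy').
by rewrite nth_index // -hi nth_index.
Qed.

Lemma decomp2 (s : seq nat) x y : x \in s -> y \in s -> index x s < index y s ->
  s = take (index x s) s ++ x :: drop (index x s).+1 (take (index y s) s) ++ y :: drop (index y s).+1 s.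
Proof.
move=> hx hy hi.
have hy' : index y s < size s by rewrite index_mem.
rewrite -{1}(cat_take_drop (index y s) s) (drop_nth 0 hy') nth_index //.
rewrite -{1}(cat_take_drop (index x s) (take (index y s) s)).
rewrite take_takel; last exact: ltnW.
rewrite (drop_nth 0); last by rewrite size_takel; lia.
by rewrite nth_take // nth_index // -catA.
Qed.

Lemma uniq_split (A B : seq nat) x y : uniq (A ++ x :: B) -> (y \in A) || (y \in B) -> y != x.
Proof.
rewrite cat_uniq /= => /and3P [_ /norP [hxA _] /andP [hxB _]] /orP [] hy;
 apply/eqP => e; subst; by [rewrite hy in hxA | rewrite hy in hxB].
Qed.

Definition blocky m (X : seq nat) := exists U V, X = U ++ V /\ all (fun x => m < x) U /\ all (fun x => x < m) V.

Lemma blocky_lt m X p q : blocky m X -> p < q -> q < size X -> nth 0 X p < m -> nth 0 X q < m.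
Proof.
move=> [U [V [-> [hU hV]]]] hpq hq; rewrite size_cat in hq; rewrite !nth_cat.
case: ifP => hp.
  by move: (allP hU _ (mem_nth 0 hp)) => /=; lia.
case: ifP => hq'; first lia.
move=> _; have := allP hV (nth 0 V (q - size U)); apply; apply: mem_nth. move/negbT: hq'; rewrite -leqNgt => hq'. by rewrite ltn_subLR.
Qed.

Lemma blocky_ne m X p : blocky m X -> p < size X -> nth 0 X p != m.
Proof.
move=> [U [V [-> [hU hV]]]] hq; rewrite size_cat in hq; rewrite !nth_cat.
case: ifP => hp.
  by move: (allP hU _ (mem_nth 0 hp)) => /=; lia.
have : nth 0 V (p - size U) < m by apply: (allP hV); apply: mem_nth; move/negbT: hp; rewrite -leqNgt => hp; by rewrite ltn_subLR.
lia.
Qed.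

Lemma blocky_gt m X p q : blocky m X -> p < q -> q < size X -> m < nth 0 X q -> m < nth 0 X p.
Proof.
move=> hb hpq hq hm.
have := blocky_ne _ _ _ hb (ltn_trans hpq hq).
case: (ltngtP (nth 0 X p) m) => // h _.
have := blocky_lt _ _ _ _ hb hpq hq h; lia.
Qed.

Lemma core m X Y : blocky m X -> blocky m Y ->
  avoids1324 (filter (fun x => x <= m) (X ++ m :: Y)) ->
  avoids1324 (filter (fun x => m <= x) (X ++ m :: Y)) -> avoids1324 (X ++ m :: Y).
Proof.
move=> bX bY AL AH [i [j [k [l [[h1 h2 h3 h4] [v1 v2 v3]]]]]].
set r := X ++ m :: Y in AL AH h4 v1 v2 v3 *.
set P := size X.
have szr : size r = P + (size Y).+1 by rewrite size_cat.
have RM : nth 0 r P = m by rewrite nth_cat ltnn subnn.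
have nL p : p < P -> nth 0 r p = nth 0 X p by move=> hp; rewrite nth_cat hp.
have nR p : P < p -> nth 0 r p = nth 0 Y (p - P).-1.
  move=> hp; rewrite nth_cat ltnNge ltnW //=.
  have -> : p - size X = (p - P).-1.+1 by rewrite /P; lia.
  done.
have R1 p q : p < q -> q < P -> m < nth 0 r q -> m < nth 0 r p.
  move=> hpq hq; rewrite !nL //; last lia.
  exact: blocky_gt.
have R1' p : p < P -> nth 0 r p != m by move=> hp; rewrite nL //; exact: blocky_ne.
have R2 p q : P < p -> p < q -> q < size r -> nth 0 r p < m -> nth 0 r q < m.
  move=> hp hpq hq; rewrite !nR //; last lia.
  apply: blocky_lt => //; lia.
have R2' p : P < p -> p < size r -> nth 0 r p != m.
  move=> hp hq; rewrite nR //; apply: blocky_ne => //; lia.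
case: (leqP (nth 0 r l) m) => hd.
  by have := filter_pat (fun x => x <= m) r i j k l (And4 h1 h2 h3 h4) (And3 v1 v2 v3); apply => //=; lia.
case: (leqP m (nth 0 r i)) => ha.
  by have := filter_pat (fun x => m <= x) r i j k l (And4 h1 h2 h3 h4) (And3 v1 v2 v3); apply => //=; lia.
have lP : P < l.
  have : l < P \/ l = P \/ P < l by lia.
  case=> [hlP|[hlP|//]].
    have := R1 i l ltac:(lia) hlP hd; lia.
  by move: hd; rewrite hlP RM ltnn.
have iP : i < P.
  have : i < P \/ i = P \/ P < i by lia.
  case=> [//|[hiP|hiP]].
    by move: ha; rewrite hiP RM ltnn.
  have := R2 i l hiP ltac:(lia) h4 ha; lia.
have : k < P \/ k = P \/ P < k by lia.
case=> [hkP|[hkP|hkP]].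
- have hb : nth 0 r j < m.
    have hne := R1' j ltac:(lia).
    case: (leqP (nth 0 r j) m) => hbm; first lia.
    have := R1 i j h1 ltac:(lia) hbm; lia.
  have := filter_pat (fun x => x <= m) r i j k P; apply => //; rewrite ?RM /=; try split; lia.
- have := R1 i j h1 ltac:(lia); rewrite hkP RM in v2.
  move=> /(_ v2); lia.
- have hc : m < nth 0 r k.
    have hne := R2' k hkP ltac:(lia).
    case: (leqP (nth 0 r k) m) => hcm //.
    have hcm' : nth 0 r k < m by lia.
    have := R2 k l hkP h3 h4 hcm'; lia.
  have jP : P < j.
    have : j < P \/ j = P \/ P < j by lia.
    case=> [hjP|[hjP|//]].
      have := R1 i j h1 hjP ltac:(lia); lia.
    by move: v2 hc; rewrite hjP RM; lia.
  have := filter_pat (fun x => m <= x) r P j k l; apply => //; rewrite ?RM /=; try split; lia.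
Qed.

Ltac clia := repeat match goal with
 | H : @eq (seq _) _ _ |- _ => clear H
 | H : is_true (perm_eq _ _) |- _ => clear H
 | H : forall _, _ |- _ => clear H
 | H : avoids1324 _ |- _ => clear H
 | H : is_true (uniq _) |- _ => clear H
 | H : is_true (_ \in _) |- _ => clear H
 | H : blocky _ _ |- _ => clear H
 end; lia.

Lemma filter_none (p : pred nat) s : (forall x, x \in s -> ~~ p x) -> filter p s = [::].
Proof.
move=> H; rewrite (eq_in_filter (a2 := pred0)) ?filter_pred0 // => x /H /negbTE -> //.
Qed.

Lemma filter_all (p : pred nat) s : (forall x, x \in s -> p x) -> filter p s = s.
Proof. by move=> H; apply/all_filterP/allP. Qed.

Lemma perm_part m l s1 s2 pi1 tau1 pi2 th2 tau2 : 2 <= m -> 2 <= l ->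
  perm_eq s1 (iota 1 m) -> perm_eq s2 (iota 1 l) ->
  s1 = pi1 ++ 1 :: m :: tau1 -> s2 = pi2 ++ 1 :: th2 ++ l :: tau2 ->
  perm_eq (map (addn (m-1)) pi2 ++ pi1 ++ [:: 1; m] ++ map (addn (m-1)) th2 ++ [:: l + m - 1]
       ++ map (addn (m-1)) tau2 ++ tau1) (iota 1 (l + m - 1)).
Proof.
move=> hm hl P1 P2 D1 D2.
have Pth : perm_eq (pi2 ++ th2 ++ tau2) (iota 2 (l-2)).
  have e : iota 1 l = 1 :: iota 2 (l-2) ++ [:: l].
    rewrite {1}(_ : l = 1 + (l-2) + 1); last clia.
    rewrite !iotaD /=.
    congr (_ :: _ ++ [:: _]); clia.
  have : perm_eq (1 :: (pi2 ++ th2 ++ tau2) ++ [:: l]) (iota 1 l).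
    apply: perm_trans P2. apply/permP => a. rewrite D2 /= !count_cat /= !count_cat /=. clia.
  by rewrite e perm_cons perm_cat2r.
apply: (@perm_trans _ ((pi1 ++ [:: 1; m] ++ tau1) ++ (map (addn (m-1)) (pi2 ++ th2 ++ tau2) ++ [:: l+m-1]))).
  apply/permP => a; rewrite !map_cat !count_cat /=; clia.
have -> : iota 1 (l+m-1) = iota 1 m ++ (iota (m-1+2) (l-2) ++ [:: l+m-1]).
  rewrite {1}(_ : l + m - 1 = m + (l-2) + 1); last clia.
  rewrite !iotaD -catA /=.
  congr (_ ++ (iota _ _ ++ [:: _])); clia.
apply: perm_cat; first by rewrite /= -D1.
apply: perm_cat => //. rewrite iotaDl. exact: perm_map.
Qed.

Lemma avoid_eq s t : avoids1324 s -> s = t -> avoids1324 t.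
Proof. by move=> H <-. Qed.

Lemma avoid_part m l s1 s2 pi1 tau1 pi2 th2 tau2 : 2 <= m -> 2 <= l ->
  avoids1324 s1 -> avoids1324 s2 ->
  s1 = pi1 ++ 1 :: m :: tau1 -> s2 = pi2 ++ 1 :: th2 ++ l :: tau2 ->
  (forall x, (x \in pi1) || (x \in tau1) -> 1 < x < m) ->
  (forall x, [|| x \in pi2, x \in th2 | x \in tau2] -> 1 < x < l) ->
  avoids1324 (map (addn (m-1)) pi2 ++ pi1 ++ [:: 1; m] ++ map (addn (m-1)) th2 ++ [:: l + m - 1]
       ++ map (addn (m-1)) tau2 ++ tau1).
Proof.
move=> hm hl A1 A2 D1 D2 F1 F2.
have G2 t : (t = pi2 \/ t = th2 \/ t = tau2) -> forall y, y \in t -> 1 < y < l.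
  by case=> [->|[->|->]] y hy; apply: F2; rewrite hy ?orbT.
have G1 t : (t = pi1 \/ t = tau1) -> forall y, y \in t -> 1 < y < m.
  by case=> [->|->] y hy; apply: F1; rewrite hy ?orbT.
have hatL t : (forall y, y \in t -> 1 < y) -> [seq x <- map (addn (m-1)) t | x <= m] = [::].
  move=> H; apply: filter_none => x /mapP [y hy ->]; have := H y hy; clia.
have hatH t : (forall y, y \in t -> 1 < y) -> [seq x <- map (addn (m-1)) t | m <= x] = map (addn (m-1)) t.
  move=> H; apply: filter_all => x /mapP [y hy ->]; have := H y hy; clia.
have -> : map (addn (m-1)) pi2 ++ pi1 ++ [:: 1; m] ++ map (addn (m-1)) th2 ++ [:: l + m - 1]
       ++ map (addn (m-1)) tau2 ++ tau1
     = (map (addn (m-1)) pi2 ++ pi1 ++ [:: 1]) ++ m :: (map (addn (m-1)) th2 ++ (l + m - 1) :: map (addn (m-1)) tau2 ++ tau1)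
    by rewrite -!catA.
apply: core.
+ exists (map (addn (m-1)) pi2), (pi1 ++ [:: 1]); split => //; split; apply/allP => x.
    move=> /mapP [y hy ->] /=; have := G2 pi2 (or_introl erefl) y hy; clia.
  rewrite mem_cat inE => /orP [hx | /eqP ->] /=; last clia.
  have := G1 pi1 (or_introl erefl) x hx; clia.
+ exists (map (addn (m-1)) th2 ++ (l + m - 1) :: map (addn (m-1)) tau2), tau1; rewrite -catA; split => //; split; apply/allP => x.
    rewrite mem_cat inE => /or3P [/mapP [y hy ->] | /eqP -> | /mapP [y hy ->]] /=; try clia.
      have := G2 th2 ltac:(tauto) y hy; clia.
    have := G2 tau2 ltac:(tauto) y hy; clia.
  move=> hx /=; have := G1 tau1 ltac:(tauto) x hx; clia.
+ apply: (avoid_eq _ _ A1).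
  have g2 t : (t = pi2 \/ t = th2 \/ t = tau2) -> forall y, y \in t -> 1 < y.
    by move=> ht y hy; have := G2 t ht y hy; clia.
  have c1 : (0 < m) = true by clia.
  have c2 : (l + m - 1 <= m) = false by clia.
  rewrite D1 !filter_cat /= !filter_cat /= c1 leqnn c2 ?filter_cat !hatL; try (apply: g2; tauto).
  rewrite (filter_all _ pi1); last by move=> y hy; have := G1 pi1 ltac:(tauto) y hy; clia.
  rewrite (filter_all _ tau1); last by move=> y hy; have := G1 tau1 ltac:(tauto) y hy; clia.
  by rewrite /= -catA.
+ have -> : [seq x <- (map (addn (m-1)) pi2 ++ pi1 ++ [:: 1]) ++ m :: (map (addn (m-1)) th2 ++ (l + m - 1) :: map (addn (m-1)) tau2 ++ tau1) | m <= x] = map (addn (m-1)) s2.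
    have c1 : (m <= 1) = false by clia.
    have c2 : (m <= l + m - 1) = true by clia.
    have g2 t : (t = pi2 \/ t = th2 \/ t = tau2) -> forall y, y \in t -> 1 < y.
      by move=> ht y hy; have := G2 t ht y hy; clia.
    have c3 t : (t = pi1 \/ t = tau1) -> [seq x <- t | m <= x] = [::].
      move=> ht; apply: filter_none => y hy; have := G1 t ht y hy; clia.
    rewrite !filter_cat /= !filter_cat /= c1 leqnn c2 ?filter_cat !hatH; try (apply: g2; tauto).
    rewrite !c3; try tauto.
    rewrite D2 !map_cat /= map_cat /= !cats0 /=.
    have e1 : m - 1 + 1 = m by clia.
    have e2 : m - 1 + l = l + m - 1 by clia.
    by rewrite e1 e2.
  exact: avoid_map.
Qed.

Lemma pos_part m l k pi1 tau1 pi2 th2 tau2 : 2 <= m -> 2 <= l ->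
  (forall x, (x \in pi1) || (x \in tau1) -> 1 < x < m) ->
  (forall x, [|| x \in pi2, x \in th2 | x \in tau2] -> 1 < x < l) ->
  size th2 = k - 1 -> 1 <= k ->
  let r := map (addn (m-1)) pi2 ++ pi1 ++ [:: 1; m] ++ map (addn (m-1)) th2 ++ [:: l + m - 1]
       ++ map (addn (m-1)) tau2 ++ tau1 in
  index (l + m - 1) r = index 1 r + k.+1.
Proof.
move=> hm hl F1 F2 szth hk r.
have n1 : (1 \in map (addn (m-1)) pi2) = false.
  apply/negbTE/negP => /mapP [y hy e]; have := F2 y ltac:(by rewrite hy); clia.
have n2 : (l + m - 1 \in map (addn (m-1)) pi2) = false.
  apply/negbTE/negP => /mapP [y hy e]; have := F2 y ltac:(by rewrite hy); clia.
have n3 : (1 \in pi1) = false.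
  apply/negbTE/negP => hy; have := F1 1 ltac:(by rewrite hy); clia.
have n4 : (l + m - 1 \in pi1) = false.
  apply/negbTE/negP => hy; have := F1 (l + m - 1) ltac:(by rewrite hy); clia.
have n5 : (l + m - 1 \in [:: 1; m]) = false.
  apply/negbTE; rewrite !inE; clia.
have n6 : (l + m - 1 \in map (addn (m-1)) th2) = false.
  apply/negbTE/negP => /mapP [y hy e]; have := F2 y ltac:(by rewrite hy orbT); clia.
rewrite /r !index_cat n1 n2 n3 n4 n5 n6 /= !inE eqxx /= !size_map szth.
clia.
Qed.

Theorem mainTheorem2 (m l k : nat) (s1 s2 : seq nat) :
  2 <= m -> 2 <= l -> 1 <= k ->
  S_prec m 1 1 s1 -> S_prec l k 1 s2 ->
  S_prec (l + m - 1) k.+1 1 (odot s1 s2).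
Proof.
move=> hm hl hk [[P1 A1] E1 _] [[P2 A2] E2 _].
have sz1 : size s1 = m by rewrite (perm_size P1) size_iota.
have sz2 : size s2 = l by rewrite (perm_size P2) size_iota.
have mem1 x : (x \in s1) = (1 <= x < 1 + m) by rewrite (perm_mem P1) mem_iota.
have mem2 x : (x \in s2) = (1 <= x < 1 + l) by rewrite (perm_mem P2) mem_iota.
have U1 : uniq s1 by rewrite (perm_uniq P1) iota_uniq.
have U2 : uniq s2 by rewrite (perm_uniq P2) iota_uniq.
have i11 : 1 \in s1 by rewrite mem1; apply/andP; split; clia.
have im1 : m \in s1 by rewrite mem1; apply/andP; split; clia.
have i12 : 1 \in s2 by rewrite mem2; apply/andP; split; clia.
have il2 : l \in s2 by rewrite mem2; apply/andP; split; clia.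
rewrite /pos in E1 E2.
have D1 := decomp1 s1 1 m i11 im1 ltac:(rewrite E1; clia).
have D2 := decomp2 s2 1 l i12 il2 ltac:(rewrite E2; clia).
have q2lt : index l s2 < size s2 by rewrite index_mem.
rewrite /odot sz1 sz2 /pos.
set p1 := index 1 s1 in D1 E1 *.
set pi1 := take p1 s1 in D1 *.
set tau1 := drop p1.+2 s1 in D1 *.
set p2 := index 1 s2 in D2 E2 *.
set q2 := index l s2 in D2 E2 q2lt *.
set pi2 := take p2 s2 in D2 *.
set th2 := drop p2.+1 (take q2 s2) in D2 *.
set tau2 := drop q2.+1 s2 in D2 *.
have szth : size th2 = k - 1.
  rewrite /th2 size_drop size_takel; clia.
clearbody pi1 tau1 pi2 th2 tau2 p1 p2 q2.
have F1 x : (x \in pi1) || (x \in tau1) -> 1 < x < m.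
  move=> hx.
  have hs : x \in s1 by rewrite D1 mem_cat !inE; case/orP: hx => ->; rewrite ?orbT.
  have h1 := uniq_split pi1 (m :: tau1) 1 x ltac:(by rewrite -D1)
     ltac:(by rewrite inE; case/orP: hx => ->; rewrite ?orbT).
  have h2 := uniq_split (pi1 ++ [:: 1]) tau1 m x ltac:(by rewrite -catA /= -D1)
     ltac:(by rewrite mem_cat; case/orP: hx => ->; rewrite ?orbT).
  move: hs; rewrite mem1; clia.
have F2 x : [|| x \in pi2, x \in th2 | x \in tau2] -> 1 < x < l.
  move=> hx.
  have hs : x \in s2 by rewrite D2 !(mem_cat, inE); case/or3P: hx => ->; rewrite ?orbT.
  have h1 := uniq_split pi2 (th2 ++ l :: tau2) 1 x ltac:(by rewrite -D2)
     ltac:(by rewrite mem_cat inE; case/or3P: hx => ->; rewrite ?orbT).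
  have h2 := uniq_split (pi2 ++ 1 :: th2) tau2 l x ltac:(by rewrite -catA /= -D2)
     ltac:(by rewrite mem_cat inE; case/or3P: hx => ->; rewrite ?orbT).
  move: hs; rewrite mem2; clia.
split; [split | | by move=> b; clia].
- exact: (perm_part m l s1 s2 pi1 tau1 pi2 th2 tau2 hm hl P1 P2 D1 D2).
- exact: (avoid_part m l s1 s2 pi1 tau1 pi2 th2 tau2 hm hl A1 A2 D1 D2 F1 F2).
- exact: (pos_part m l k pi1 tau1 pi2 th2 tau2).
Qed.
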